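(* Let $n \ge 0$ and $p \ge 1$ be integers, let $T_2 = \begin{pmatrix} 1 & 0 \\ 1 & 1 \end{pmatrix}$ over $\mathbb{F}_2$, let $T_p$ be a $p \times p$ binary kernel matrix, and let $T_N = T_2^{\otimes n} \otimes T_p$, where $N = 2^n p$. Then the minimum-distance spectra satisfy $$S_{T_N} = \operatorname{sort}\big(S_{T_2^{\otimes n}} \otimes S_{T_p}\big) = \operatorname{sort}\big([2 \;\; 1]^{\otimes n} \otimes S_{T_p}\big),$$ that is, for every $k \in \{1,\dots,N\}$, $S_{T_N}(k)$ equals the $k$-th entry of the vector obtained by sorting the entries of the length-$N$ vector $[2\;\;1]^{\otimes n} \otimes S_{T_p}$ in non-increasing order (and likewise for $S_{T_2^{\otimes n}} \otimes S_{T_p}$).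
   Context: All matrices are over $\mathbb{F}_2$ and $\otimes$ denotes the Kronecker product (of matrices, and of row vectors regarded as $1\times m$ matrices); $A^{\otimes n}$ is the $n$-fold Kronecker power, with $A^{\otimes 0} = (1)$. A binary kernel is a $p\times p$ binary matrix that is polarizing, i.e. it is invertible over $\mathbb{F}_2$ and no column permutation of it is upper triangular. For a binary $m \times m$ matrix $T$ with rows indexed by $[m] = \{0,1,\dots,m-1\}$ and a subset $\mathcal{R} \subseteq [m]$, $T^{(\mathcal{R})}$ denotes the submatrix formed by the rows indexed by $\mathcal{R}$, and $d(A)$ denotes the minimum Hamming distance (minimum weight of a nonzero codeword) of the binary linear code spanned by the rows of $A$. The minimum-distance spectrum of $T$ is the vector $S_T = (S_T(1), \dots, S_T(m))$ with $S_T(k) = \max_{\mathcal{R}\subseteq[m],\, |\mathcal{R}| = k} d\big(T^{(\mathcal{R})}\big)$. For a real vector $v$, $\operatorname{sort}(v)$ is the vector with the same entries (with multiplicity) arranged in non-increasing order. *)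

(* Defs.v *)
From HB Require Import structures.
From mathcomp Require Import all_boot all_order all_algebra all_fingroup.
From mathcomp Require Export mxtens.
Set Implicit Arguments. Unset Strict Implicit. Unset Printing Implicit Defensive.
Import GRing.Theory.
Local Open Scope ring_scope.

(* Kronecker product of matrices: [tensmx] (notation A *t B) and Kronecker
   power [ntensmx] (notation A ^t n, with A ^t 0 = the 1x1 identity) come
   from mathcomp real_closed's mxtens.v; entry (i1*p+i2, j1*q+j2) of A *t B
   is A i1 j1 * B i2 j2. *)

Definition T2 : 'M['F_2]_2 := \matrix_(i < 2, j < 2) (if (i < j)%N then 0 else 1).

Definition upper_tri {p : nat} (A : 'M['F_2]_p) : Prop :=
  forall i j : 'I_p, (j < i)%N -> A i j = 0.

Definition binary_kernel {p : nat} (A : 'M['F_2]_p) : Prop :=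
  A \in unitmx /\ forall s : 'S_p, ~ upper_tri (col_perm s A).

Definition wt {n : nat} (c : 'rV['F_2]_n) : nat := #|[set j | c 0 j != 0]|.

(* Minimum distance of the code spanned by the rows of A (minimum weight of a
   nonzero codeword; n, the length, if the code is {0} -- never used here). *)
Definition mindist {r n : nat} (A : 'M['F_2]_(r, n)) : nat :=
  \big[minn/n]_(c : 'rV['F_2]_n | (c <= A)%MS && (c != 0)) wt c.

(* T^(R): the rows of T indexed by R (other rows replaced by zero, which
   does not change the spanned code). *)
Definition rows_of {m n : nat} (T : 'M['F_2]_(m, n)) (R : {set 'I_m}) : 'M['F_2]_(m, n) :=
  \matrix_(i, j) (if i \in R then T i j else 0).

Definition spec {m : nat} (T : 'M['F_2]_m) (k : nat) : nat :=
  \max_(R : {set 'I_m} | #|R| == k) mindist (rows_of T R).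

Definition spec_seq {m : nat} (T : 'M['F_2]_m) : seq nat :=
  [seq spec T k | k <- iota 1 m].

Definition kron_seq (s t : seq nat) : seq nat :=
  flatten [seq [seq (a * b)%N | b <- t] | a <- s].

Fixpoint kron_pow_seq (s : seq nat) (n : nat) : seq nat :=
  if n is n'.+1 then kron_seq s (kron_pow_seq s n') else [:: 1%N].

Definition sort_desc (s : seq nat) : seq nat := sort geq s.

(* Main.v *)
Require Import Defs.
From mathcomp Require Import all_boot all_order all_algebra all_fingroup.
From mathcomp Require Import mxtens zify.
Set Implicit Arguments. Unset Strict Implicit. Unset Printing Implicit Defensive.
Import GRing.Theory.
Local Open Scope ring_scope.

Definition wtM {a b : nat} (M : 'M['F_2]_(a,b)) : nat :=
  (\sum_(i < a) \sum_(j < b) (M i j != 0%R : nat))%N.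

Lemma wtE {n} (c : 'rV['F_2]_n) : wt c = wtM c.
Proof.
rewrite /wt /wtM big_ord1 -sum1_card big_mkcond /=.
by apply: eq_bigr => j _; rewrite inE; case: (c 0 j != 0%R).
Qed.

Lemma big_tens (R : Type) (idx : R) (op : Monoid.com_law idx) m q
  (F : 'I_(m * q) -> R) :
  \big[op/idx]_(k < m * q) F k =
  \big[op/idx]_(i < m) \big[op/idx]_(j < q) F (mxtens_index (i, j)).
Proof.
rewrite (reindex (@mxtens_index m q)) /=; last first.
  by exists (@mxtens_unindex m q) => x _; [apply: mxtens_indexK|apply: mxtens_unindexK].
by rewrite pair_big /=; apply: eq_bigr => -[i j].
Qed.

Lemma wtM_le_row {b} (c : 'rV['F_2]_b) : (wtM c <= b)%N.
Proof.
rewrite /wtM big_ord1 (leq_trans (_ : _ <= \sum_(j < b) 1)%N) //.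
  by apply: leq_sum => j _; case: (c 0 j != 0%R).
by rewrite sum1_card card_ord.
Qed.

Lemma wtM_eq0 {a b} (M : 'M['F_2]_(a,b)) : (wtM M == 0%N) = (M == 0).
Proof.
apply/idP/idP.
- rewrite /wtM sum_nat_eq0 => /forallP H; apply/eqP/matrixP => i j.
  move: (H i); rewrite /= sum_nat_eq0 => /forallP /(_ j).
  by rewrite mxE; case: (eqVneq (M i j) 0).
- move/eqP ->; rewrite /wtM big1 // => i _; rewrite big1 // => j _.
  by rewrite mxE eqxx.
Qed.

Lemma wtM_tri {a b} (U V : 'M['F_2]_(a,b)) : (wtM U <= wtM (U + V) + wtM V)%N.
Proof.
rewrite /wtM -big_split /=; apply: leq_sum => i _.
rewrite -big_split /=; apply: leq_sum => j _.
rewrite mxE; case: (eqVneq (V i j) 0) => [->|]; first by rewrite addr0 addn0.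
by move=> _; rewrite addn1; case: (_ != _).
Qed.

Lemma bigmin_le_gen (I : finType) (P : pred I) (F : I -> nat) d i0 :
  P i0 -> (\big[minn/d]_(i | P i) F i <= F i0)%N.
Proof.
move=> Pi0; have : i0 \in index_enum I by rewrite mem_index_enum.
elim: (index_enum I) => [|a r IH] //; rewrite inE big_cons.
case/orP => [/eqP <-|/IH]; first by rewrite Pi0 geq_minl.
by case: (P a) => // H; rewrite (leq_trans (geq_minr _ _) H).
Qed.

Lemma bigmin_le_d (I : finType) (P : pred I) (F : I -> nat) d :
  (\big[minn/d]_(i | P i) F i <= d)%N.
Proof.
elim: (index_enum I) => [|a r IH]; first by rewrite big_nil.
by rewrite big_cons; case: (P a) => //; rewrite (leq_trans (geq_minr _ _) IH).
Qed.

Lemma mindist_le {r n} (A : 'M['F_2]_(r, n)) c :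
  (c <= A)%MS -> c != 0 -> (mindist A <= wt c)%N.
Proof. by move=> H1 H2; apply: bigmin_le_gen; rewrite H1 H2. Qed.

Lemma mindist_len {r n} (A : 'M['F_2]_(r, n)) : (mindist A <= n)%N.
Proof. exact: bigmin_le_d. Qed.

Lemma mindist_cases {r n} (A : 'M['F_2]_(r, n)) :
  (exists c, [/\ (c <= A)%MS, c != 0 & wt c = mindist A]) \/ mindist A = n.
Proof.
rewrite /mindist; apply: (big_ind (fun x => (exists c, [/\ (c <= A)%MS, c != 0 & wt c = x]) \/ x = n)).
- by right.
- move=> x y Hx Hy; rewrite /minn; case: ifP => _; [exact: Hx|exact: Hy].
- by move=> c /andP [H1 H2]; left; exists c.
Qed.

Lemma wt_pos {n} (c : 'rV['F_2]_n) : c != 0 -> (0 < wt c)%N.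
Proof. by rewrite wtE lt0n wtM_eq0. Qed.

Lemma mindist_pos {r n} (A : 'M['F_2]_(r, n)) : (0 < n)%N -> (0 < mindist A)%N.
Proof.
move=> n0; case: (mindist_cases A) => [[c [_ H <-]]|->] //; exact: wt_pos.
Qed.

Definition supp_in {m} (x : 'rV['F_2]_m) (R : {set 'I_m}) :=
  forall i, x 0 i != 0 -> i \in R.

Lemma rows_of_mul {m N} (T : 'M['F_2]_(m, N)) R (y : 'rV_m) :
  y *m rows_of T R = (\row_i (if i \in R then y 0 i else 0)) *m T.
Proof.
apply/matrixP => i j; rewrite !mxE; apply: eq_bigr => k _; rewrite !mxE.
by rewrite [i]ord1; case: ifP => _; rewrite ?mulr0 ?mul0r.
Qed.

Lemma cw_of {m N} (T : 'M['F_2]_(m, N)) R c :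
  (c <= rows_of T R)%MS -> exists x, supp_in x R /\ c = x *m T.
Proof.
case/submxP => y ->; rewrite rows_of_mul; eexists; split; last by [].
by move=> i; rewrite mxE; case: (i \in R); rewrite ?eqxx.
Qed.

Lemma of_cw {m N} (T : 'M['F_2]_(m, N)) R x :
  supp_in x R -> (x *m T <= rows_of T R)%MS.
Proof.
move=> Hx; apply/submxP; exists x; rewrite rows_of_mul; congr (_ *m _).
apply/matrixP => i j; rewrite !mxE [i]ord1; case: ifP => // Hj.
by apply/eqP; apply: contraFT Hj => /Hx.
Qed.

Lemma mindist_mono {m N} (T : 'M['F_2]_(m, N)) (R1 R2 : {set 'I_m}) :
  R1 \subset R2 -> (mindist (rows_of T R2) <= mindist (rows_of T R1))%N.
Proof.
move=> sR; case: (mindist_cases (rows_of T R1)) => [[c [Hc Hn <-]]|->].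
- apply: mindist_le Hn; case: (cw_of Hc) => x [Hx ->]; apply: of_cw.
  by move=> i /Hx; apply: (subsetP sR).
- exact: mindist_len.
Qed.

Lemma card_sum (I : finType) (P : pred I) : #|[set i | P i]| = (\sum_i (P i : nat))%N.
Proof.
rewrite -sum1_card big_mkcond /=.
by apply: eq_bigr => j _; rewrite inE; case: (P j).
Qed.

Lemma sum_lt p L : (\sum_(l < p) (l < L : nat))%N = minn L p.
Proof.
elim: p => [|p IH]; first by rewrite big_ord0 minn0.
rewrite big_ord_recr /= IH; case: ltnP => H; lia.
Qed.

Lemma spec_ge {m} (T : 'M['F_2]_m) (R : {set 'I_m}) k :
  #|R| = k -> (mindist (rows_of T R) <= spec T k)%N.
Proof. by move=> HR; rewrite /spec (leq_bigmax_cond R) // HR. Qed.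

Lemma spec_le {m} (T : 'M['F_2]_m) k B :
  (forall R : {set 'I_m}, #|R| = k -> mindist (rows_of T R) <= B)%N ->
  (spec T k <= B)%N.
Proof. by move=> H; apply/bigmax_leqP => R /eqP /H. Qed.

Lemma spec_attained {m} (T : 'M['F_2]_m) k : (k <= m)%N ->
  exists R : {set 'I_m}, #|R| = k /\ mindist (rows_of T R) = spec T k.
Proof.
move=> km; rewrite /spec.
have [R0 HR0] : exists R0 : {set 'I_m}, #|R0| = k.
  exists [set i : 'I_m | (i < k)%N]; rewrite card_sum sum_lt; lia.
have H0 : (0 < #|[pred R : {set 'I_m} | #|R| == k]|)%N.
  by apply/card_gt0P; exists R0; rewrite inE /= HR0.
have [R] := @eq_bigmax_cond _ [pred R : {set 'I_m} | #|R| == k] (fun R => mindist (rows_of T R)) H0.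
by move=> /= /eqP HR ->; exists R.
Qed.

Lemma spec_mono {m} (T : 'M['F_2]_m) k : (spec T k.+1 <= spec T k)%N.
Proof.
apply: spec_le => R HR.
have [x xR] : exists x, x \in R by apply/card_gt0P; rewrite HR.
apply: leq_trans (mindist_mono T (subD1set R x)) _.
by apply: spec_ge; have := cardsD1 x R; rewrite xR HR; lia.
Qed.

Lemma spec_mono_gen {m} (T : 'M['F_2]_m) k l : (k <= l)%N -> (spec T l <= spec T k)%N.
Proof.
move/subnKC <-; elim: (l - k)%N => [|d IH]; first by rewrite addn0.
by rewrite addnS (leq_trans (spec_mono _ _) IH).
Qed.
Definition rw {m} (A : 'M['F_2]_m) (i : 'I_m) : nat := wtM (row i A).

Definition Plot {m} (A : 'M['F_2]_m) : Prop :=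
  (forall i, 0 < rw A i)%N /\
  forall q (X : 'M['F_2]_(m, q)), X != 0 ->
    exists i, row i X != 0 /\ (rw A i * wtM (row i X) <= wtM (A^T *m X))%N.

Lemma T2_tens1 : T2 *t (1 : 'M['F_2]_1) = T2.
Proof.
apply/matrixP => i j; rewrite !mxE /=.
set a := Ordinal _; set b := Ordinal _.
have -> : a = b by rewrite [a]ord1 [b]ord1.
by rewrite eqxx mulr1 !divn1.
Qed.

Lemma T2n_S n : exists e : (2 * 2 ^ n = 2 ^ n.+1)%N,
  T2 ^t n.+1 = castmx (e, e) (T2 *t T2 ^t n).
Proof.
case: n => [|n].
  by exists erefl; rewrite castmx_id ntensmx0 T2_tens1.
by exists erefl; rewrite castmx_id.
Qed.

Lemma Plot_cast m m' (e : m = m') (A : 'M['F_2]_m) : Plot A -> Plot (castmx (e, e) A).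
Proof. by case: m' / e; rewrite castmx_id. Qed.

Lemma Plot_1 : Plot (1 : 'M['F_2]_1).
Proof.
have rw1 : forall i, rw (1 : 'M['F_2]_1) i = 1%N.
  by move=> i; rewrite /rw /wtM !big_ord1 [i]ord1 !mxE.
split; first by move=> i; rewrite rw1.
move=> q X X0; exists ord0; rewrite rw1 mul1n trmx1 mul1mx.
have -> : row ord0 X = X by apply/matrixP => i j; rewrite mxE [i]ord1.
by [].
Qed.

Lemma lift0max : (lift ord0 ord0 : 'I_2) = ord_max.
Proof. exact: val_inj. Qed.
Lemma T2_00 : T2 ord0 ord0 = 1. Proof. by rewrite mxE. Qed.
Lemma T2_01 : T2 ord0 ord_max = 0. Proof. by rewrite mxE. Qed.
Lemma T2_10 : T2 ord_max ord0 = 1. Proof. by rewrite mxE. Qed.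
Lemma T2_11 : T2 ord_max ord_max = 1. Proof. by rewrite mxE. Qed.

Section Step.
Variables (m : nat) (A : 'M['F_2]_m).

Definition Xb {q} (X : 'M['F_2]_(2 * m, q)) (b : 'I_2) : 'M['F_2]_(m, q) :=
  \matrix_(i, j) X (mxtens_index (b, i)) j.

Lemma prod_entry q (X : 'M['F_2]_(2 * m, q)) c s j :
  ((T2 *t A)^T *m X) (mxtens_index (c, s)) j =
  \sum_(b < 2) T2 b c * (A^T *m Xb X b) s j.
Proof.
rewrite mxE big_tens; apply: eq_bigr => b _.
rewrite [(A^T *m _) _ _]mxE big_distrr /=; apply: eq_bigr => i _.
by rewrite [(_^T) _ _]mxE tensmxE !mxE mulrA.
Qed.

Lemma wt_step q (X : 'M['F_2]_(2 * m, q)) :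
  wtM ((T2 *t A)^T *m X) =
  (wtM (A^T *m Xb X ord0 + A^T *m Xb X ord_max) + wtM (A^T *m Xb X ord_max))%N.
Proof.
rewrite /wtM big_tens big_ord_recl big_ord1; congr (_ + _)%N.
  apply: eq_bigr => s _; apply: eq_bigr => j _.
  by rewrite prod_entry big_ord_recl big_ord1 lift0max T2_00 T2_10 !mul1r [in RHS]mxE.
apply: eq_bigr => s _; apply: eq_bigr => j _.
by rewrite lift0max prod_entry big_ord_recl big_ord1 lift0max T2_01 T2_11 mul0r mul1r add0r.
Qed.

Lemma rw_step b i : rw (T2 *t A) (mxtens_index (b, i)) = ((b : nat).+1 * rw A i)%N.
Proof.
rewrite /rw /wtM !big_ord1 big_tens big_ord_recl big_ord1.
rewrite lift0max.
have [->|->] : b = ord0 \/ b = ord_max.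
    by case: b => [[|[|//]]] Hb; [left|right]; apply: val_inj.
  rewrite mul1n -[RHS]addn0; congr (_ + _)%N.
    by apply: eq_bigr => s _; rewrite mxE tensmxE T2_00 mul1r [in RHS]mxE.
  by apply: big1 => s _; rewrite mxE tensmxE T2_01 mul0r eqxx.
have -> : forall x, (((ord_max : 'I_2) : nat).+1 * x = x + x)%N.
  by move=> x; rewrite /= mul2n addnn.
congr (_ + _)%N.
  by apply: eq_bigr => s _; rewrite mxE tensmxE T2_10 mul1r [in RHS]mxE.
by apply: eq_bigr => s _; rewrite mxE tensmxE T2_11 mul1r [in RHS]mxE.
Qed.

Lemma row_step q (X : 'M['F_2]_(2 * m, q)) b i :
  row (mxtens_index (b, i)) X = row i (Xb X b).
Proof. by apply/matrixP => r j; rewrite !mxE. Qed.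

End Step.

Lemma ordmaxS x : (((ord_max : 'I_2) : nat).+1 * x = x + x)%N.
Proof. by rewrite /= mul2n addnn. Qed.

Lemma ord2_cases (b : 'I_2) : b = ord0 \/ b = ord_max.
Proof. by case: b => [[|[|//]]] Hb; [left|right]; apply: val_inj. Qed.

Lemma Plot_step m (A : 'M['F_2]_m) : Plot A -> Plot (T2 *t A).
Proof.
case=> Hpos HP; split.
  by move=> k; case: (mxtens_indexP k) => b i; rewrite rw_step muln_gt0 Hpos andbT.
move=> q X X0.
case: (eqVneq (Xb X ord0) 0) => H0.
  have H1 : Xb X ord_max != 0.
    apply: contra X0 => /eqP H1; apply/eqP/matrixP => k j.
    case: (mxtens_indexP k) => b i; rewrite [RHS]mxE.
    case: (ord2_cases b) => ->.
      by move/matrixP: H0 => /(_ i j); rewrite !mxE.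
    by move/matrixP: H1 => /(_ i j); rewrite !mxE.
  case: (HP _ _ H1) => i [Hr Hle]; exists (mxtens_index (ord_max, i)).
  rewrite row_step rw_step; split => //.
  rewrite wt_step H0 mulmx0 add0r -mulnA ordmaxS; lia.
case: (HP _ _ H0) => i [Hr Hle]; exists (mxtens_index (ord0, i)).
rewrite row_step rw_step; split => //.
rewrite wt_step mul1n; exact: leq_trans Hle (wtM_tri _ _).
Qed.

Lemma Plot_T2n n : Plot (T2 ^t n).
Proof.
elim: n => [|n IH]; first exact: Plot_1.
case: (T2n_S n) => e ->; apply: Plot_cast; exact: Plot_step.
Qed.

Section Main.
Variables (m p : nat) (A : 'M['F_2]_m) (Tp : 'M['F_2]_p).

Definition Xof (x : 'rV['F_2]_(m * p)) : 'M['F_2]_(m, p) :=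
  \matrix_(i, j) x 0 (mxtens_index (i, j)).

Definition Rsec (R : {set 'I_(m * p)}) (i : 'I_m) : {set 'I_p} :=
  [set j | mxtens_index (i, j) \in R].

Lemma cw_entry x s t :
  (x *m (A *t Tp)) 0 (mxtens_index (s, t)) = (A^T *m (Xof x *m Tp)) s t.
Proof.
rewrite [LHS]mxE [RHS]mxE big_tens; apply: eq_bigr => i _.
rewrite [(Xof x *m Tp) _ _]mxE big_distrr; apply: eq_bigr => j _.
rewrite tensmxE [A^T _ _]mxE [Xof x _ _]mxE.
by rewrite /= mulrCA.
Qed.

Lemma cw_wt x : wt (x *m (A *t Tp)) = wtM (A^T *m (Xof x *m Tp)).
Proof.
rewrite wtE /wtM big_ord1 big_tens; apply: eq_bigr => s _.
by apply: eq_bigr => t _; rewrite cw_entry.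
Qed.


Lemma wtM_prod (a : 'I_m -> 'F_2) (b : 'rV['F_2]_p) :
  wtM (\matrix_(s, t) (a s * b 0 t)) =
  ((\sum_s (a s != 0%R : nat)) * wtM b)%N.
Proof.
rewrite /wtM big_ord1 big_distrl /=; apply: eq_bigr => s _.
rewrite big_distrr /=; apply: eq_bigr => t _.
by rewrite mxE mulf_eq0 negb_or; case: (a s != 0%R); case: (b 0 t != 0%R).
Qed.

Lemma row_nz (j : 'I_p) : Tp \in unitmx -> row j Tp != 0.
Proof.
move=> uT; apply/eqP => H.
have : row j Tp *m invmx Tp = 0 by rewrite H mul0mx.
rewrite rowE mulmxK // => /matrixP /(_ 0 j); rewrite !mxE !eqxx /=.
by move/eqP; rewrite oner_eq0.
Qed.

Lemma UB (R : {set 'I_(m * p)}) i :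
  Tp \in unitmx -> Plot A -> Rsec R i != set0 ->
  (mindist (rows_of (A *t Tp) R) <= rw A i * mindist (rows_of Tp (Rsec R i)))%N.
Proof.
move=> uT [Hpos _] Hne.
have [c [Hc Hc0 Hwt]] : exists c, [/\ (c <= rows_of Tp (Rsec R i))%MS, c != 0 &
     (wt c <= mindist (rows_of Tp (Rsec R i)))%N].
  case: (mindist_cases (rows_of Tp (Rsec R i))) => [[c [H1 H2 <-]]|->].
    by exists c; split.
  case/set0Pn: Hne => j Hj; exists (row j Tp); split.
  - rewrite rowE; apply: of_cw => k; rewrite mxE.
    by rewrite eqxx /=; case: (eqVneq k j) => [->|_] //=; rewrite eqxx.

  - exact: row_nz.
  - by rewrite wtE wtM_le_row.
case: (cw_of Hc) => y [Hy Ec].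
pose x : 'rV['F_2]_(m * p) := \row_k (if (mxtens_unindex k).1 == i
   then y 0 (mxtens_unindex k).2 else 0).
have Xx : A^T *m (Xof x *m Tp) = \matrix_(s, t) (A i s * c 0 t).
  apply/matrixP => s t; rewrite [LHS]mxE [RHS]mxE (bigD1 i) //= big1 ?addr0.
    rewrite [(Xof x *m Tp) _ _]mxE Ec [(y *m Tp) _ _]mxE [A^T _ _]mxE.
    rewrite (eq_bigr (fun j => y 0 j * Tp j t)) // => j _.
    by rewrite [Xof x _ _]mxE [x _ _]mxE mxtens_indexK /= eqxx.
  move=> i' /negbTE Hi'; rewrite [(Xof x *m Tp) _ _]mxE big1 ?mulr0 //.
  by move=> j _; rewrite [Xof x _ _]mxE [x _ _]mxE mxtens_indexK /= Hi' mul0r.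
have Hwx : wt (x *m (A *t Tp)) = (rw A i * wt c)%N.
  have Hr : (\sum_s (A i s != 0%R : nat))%N = rw A i.
    by rewrite /rw /wtM big_ord1; apply: eq_bigr => s _; rewrite mxE.
  by rewrite cw_wt Xx wtM_prod wtE Hr.
apply: leq_trans (leq_mul (leqnn _) Hwt); rewrite -Hwx.
apply: mindist_le.
  apply: of_cw => k; rewrite mxE; case: ifP => [/eqP Ei Hk|_]; last by rewrite eqxx.
  by have := Hy _ Hk; rewrite inE -Ei -surjective_pairing mxtens_unindexK.
by rewrite -wtM_eq0 -wtE Hwx muln_eq0 negb_or !lt0n_neq0 ?Hpos ?wt_pos.
Qed.

Lemma LB (R : {set 'I_(m * p)}) : Plot A -> R != set0 ->
  exists i, Rsec R i != set0 /\
    (rw A i * mindist (rows_of Tp (Rsec R i)) <= mindist (rows_of (A *t Tp) R))%N.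
Proof.
move=> [_ HP] Hne.
case: (mindist_cases (rows_of (A *t Tp) R)) => [[c [Hc Hc0 <-]]|->].
  case: (cw_of Hc) => x [Hx Ec].
  set Y := Xof x *m Tp.
  have Y0 : Y != 0.
    apply: contra Hc0 => /eqP Y0.
    by rewrite -wtM_eq0 -wtE Ec cw_wt -/Y Y0 mulmx0 wtM_eq0.
  case: (HP _ _ Y0) => i [Hr Hle].
  have Hsupp : supp_in (row i (Xof x)) (Rsec R i).
    by move=> j; rewrite !mxE => /Hx; rewrite inE.
  have Hrow : row i Y = row i (Xof x) *m Tp by rewrite row_mul.
  exists i; split.
    apply/set0Pn.
    case: (pickP (fun j => row i (Xof x) 0 j != 0)) => [j Hj|H0].
      by exists j; apply: Hsupp.
    move: Hr; rewrite Hrow.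
    have -> : row i (Xof x) = 0.
      by apply/matrixP => r j; rewrite [r]ord1; have := H0 j; rewrite /= => /negbFE/eqP ->; rewrite mxE.
    by rewrite mul0mx eqxx.
  rewrite Ec cw_wt -/Y; apply: leq_trans Hle; rewrite leq_mul2l; apply/orP; right.
  by rewrite -wtE; apply: mindist_le => //; rewrite Hrow; apply: of_cw.
case/set0Pn: Hne => r Hr; exists (mxtens_unindex r).1.
have Hin : (mxtens_unindex r).2 \in Rsec R (mxtens_unindex r).1.
  by rewrite inE -surjective_pairing mxtens_unindexK.
split; first by apply/set0Pn; exists (mxtens_unindex r).2.
by apply: leq_mul; [apply: wtM_le_row | apply: mindist_len].
Qed.

End Main.

Lemma count_sumb (T : Type) (P : pred T) (s : seq T) :
  count P s = (\sum_(x <- s) (P x : nat))%N.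
Proof. by elim: s => [|a s IH]; rewrite ?big_nil ?big_cons //= IH. Qed.

Lemma geq_trans : transitive geq.
Proof. by move=> a b c /= H1 H2; apply: leq_trans H2 H1. Qed.

Lemma sorted_desc_nth (t : seq nat) k mu : sorted geq t -> (1 <= k <= size t)%N ->
  (mu <= nth 0 t k.-1)%N = (k <= count (fun x => mu <= x) t)%N.
Proof.
elim: t k => [|a t IH] k //=; first by case: k.
move=> Hs /andP [k1 kt].
have Ht : sorted geq t := path_sorted Hs.
have Ha : all (geq a) t := order_path_min geq_trans Hs.
have Hc0 : (a < mu)%N -> count (fun x => mu <= x)%N t = 0%N.
  move=> amu; apply/eqP; rewrite -leqn0 leqNgt -has_count; apply/hasPn => x xt.
  by move/allP: Ha => /(_ x xt) /= xa; rewrite -ltnNge (leq_ltn_trans xa amu).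
case: k k1 kt => [//|[|k]] _ kt /=.
  by case: (leqP mu a) => [amu|amu]; last rewrite Hc0.
case: (leqP mu a) => [amu|amu].
  by rewrite (IH k.+1) // add1n ltnS.
rewrite Hc0 //; apply/negbTE; rewrite -ltnNge.
have : nth 0 t k \in t by rewrite mem_nth.
by move/allP: Ha => H /H /= xa; rewrite (leq_ltn_trans xa amu).
Qed.

Lemma sort_nth (s : seq nat) k mu : (1 <= k <= size s)%N ->
  (mu <= nth 0 (sort_desc s) k.-1)%N = (k <= count (fun x => mu <= x) s)%N.
Proof.
move=> Hk; rewrite /sort_desc sorted_desc_nth ?size_sort //.
  have Hp : perm_eq (sort geq s) s by rewrite perm_sort.
  by move/seq.permP: Hp => ->.
by apply: sort_sorted => a b; apply: leq_total.
Qed.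

Lemma count_kron (Q : pred nat) (w s : seq nat) :
  count Q (kron_seq w s) = (\sum_(a <- w) count (fun b => Q (a * b)%N) s)%N.
Proof.
rewrite /kron_seq count_flatten -map_comp sumnE big_map.
by apply: eq_bigr => a _ /=; rewrite count_map.
Qed.

Lemma count_spec {p} (Tp : 'M['F_2]_p) (Q : pred nat) :
  count Q (spec_seq Tp) = (\sum_(l < p) Q (spec Tp l.+1))%N.
Proof.
rewrite /spec_seq count_map count_sumb -(addn0 1%N) iotaDl big_map.
have -> : iota 0 p = index_iota 0 p by rewrite /index_iota subn0.
by rewrite big_mkord.
Qed.

Lemma rw_one (i : 'I_1) : rw (1 : 'M['F_2]_1) i = 1%N.
Proof. by rewrite /rw /wtM !big_ord1 [i]ord1 !mxE. Qed.

Lemma sum_cast m m' (e : m = m') (A : 'M['F_2]_m) (F : nat -> nat) :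
  (\sum_(i < m') F (rw (castmx (e, e) A) i) = \sum_(i < m) F (rw A i))%N.
Proof. by case: m' / e; rewrite castmx_id. Qed.

Lemma sum_step m (A : 'M['F_2]_m) (F : nat -> nat) :
  (\sum_(k < 2 * m) F (rw (T2 *t A) k) =
   \sum_(i < m) F (rw A i) + \sum_(i < m) F (rw A i + rw A i))%N.
Proof.
rewrite big_tens big_ord_recl big_ord1 lift0max; congr (_ + _)%N.
  by apply: eq_bigr => i _; rewrite rw_step mul1n.
by apply: eq_bigr => i _; rewrite rw_step ordmaxS.
Qed.

Lemma Hw n (Q : pred nat) :
  count Q (kron_pow_seq [:: 2%N; 1%N] n) = (\sum_(i < 2 ^ n) Q (rw (T2 ^t n) i))%N.
Proof.
elim: n Q => [|n IH] Q.
  by rewrite /= big_ord1 rw_one addn0.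
rewrite /= count_kron !big_cons big_nil addn0.
case: (T2n_S n) => e ->.
rewrite (sum_cast e (T2 *t T2 ^t n) (fun x => Q x : nat)).
rewrite (sum_step (T2 ^t n) (fun x => Q x : nat)) addnC.
rewrite (IH (fun b => Q (2 * b)%N)) (IH (fun b => Q (1 * b)%N)).
congr (_ + _)%N; apply: eq_bigr => i _; by rewrite ?mul1n ?mul2n ?addnn.
Qed.

Lemma count_main n p (Tp : 'M['F_2]_p) (Q : pred nat) :
  count Q (kron_seq (kron_pow_seq [:: 2%N; 1%N] n) (spec_seq Tp)) =
  (\sum_(i < 2 ^ n) \sum_(l < p) Q (rw (T2 ^t n) i * spec Tp l.+1))%N.
Proof.
rewrite count_kron (eq_bigr (fun a => \sum_(l < p) Q (a * spec Tp l.+1) : nat)%N);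
  last by move=> a _; rewrite count_spec.
rewrite exchange_big /= [RHS]exchange_big /=; apply: eq_bigr => l _.
by rewrite -count_sumb (Hw n (fun a => Q (a * spec Tp l.+1)%N)).
Qed.

Lemma size_main n p (Tp : 'M['F_2]_p) :
  size (kron_seq (kron_pow_seq [:: 2%N; 1%N] n) (spec_seq Tp)) = (2 ^ n * p)%N.
Proof.
rewrite -count_predT count_main.
rewrite (eq_bigr (fun _ => p)); last by move=> i _; rewrite sum1_card card_ord.
by rewrite sum_nat_const card_ord.
Qed.

Lemma exists_subset (T : finType) (A : {set T}) k : (k <= #|A|)%N ->
  exists B : {set T}, B \subset A /\ #|B| = k.
Proof.
elim: k => [|k IH] Hk; first by exists set0; rewrite sub0set cards0.
case: (IH (ltnW Hk)) => B [BA HB].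
have [x xA xB] : exists2 x, x \in A & x \notin B.
  apply/exists_inP; apply: contraT; rewrite negb_exists_in => /forall_inP H.
  have : A \subset B by apply/subsetP => y /H; rewrite negbK.
  by move/subset_leq_card; rewrite HB leqNgt Hk.
exists (x |: B); split; first by rewrite subUset sub1set xA BA.
by rewrite cardsU1 xB HB.
Qed.

Lemma prefix_pred (P : pred nat) p :
  (forall l, P l.+1 -> P l) -> (0 < \sum_(l < p) P l)%N ->
  P (\sum_(l < p) P l).-1.
Proof.
set L := (\sum_(l < p) P l)%N => Hcl HL.
apply: contraT => HnP.
have H : forall d, ~~ P (L.-1 + d)%N.
  elim=> [|d IH]; first by rewrite addn0.
  by apply: contra IH; rewrite addnS; apply: Hcl.
have : (L <= \sum_(l < p) (l < L.-1 : nat))%N.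
  rewrite /L; apply: leq_sum => l _.
  case: (ltnP l L.-1) => Hl; first by case: (P l).
  by move: (H (l - L.-1)%N); rewrite subnKC // => /negbTE ->.
rewrite sum_lt; lia.
Qed.

Lemma card_Rsec m p (R : {set 'I_(m * p)}) :
  #|R| = (\sum_(i < m) #|Rsec R i|)%N.
Proof.
rewrite -sum1_card big_mkcond /= big_tens; apply: eq_bigr => i _.
rewrite -sum1_card [RHS]big_mkcond /=; apply: eq_bigr => j _.
by rewrite inE.
Qed.

Theorem main_thm n p (Tp : 'M['F_2]_p) : Tp \in unitmx ->
  forall k, (1 <= k <= 2 ^ n * p)%N ->
  spec (T2 ^t n *t Tp) k =
  nth 0%N (sort_desc (kron_seq (kron_pow_seq [:: 2%N; 1%N] n) (spec_seq Tp))) k.-1.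
Proof.
move=> uT k Hk.
set V := kron_seq _ _; set v := nth 0%N _ _.
have HA := Plot_T2n n.
have key : forall mu, (mu <= v)%N =
   (k <= \sum_(i < 2 ^ n) \sum_(l < p) (mu <= rw (T2 ^t n) i * spec Tp l.+1 : nat))%N.
  by move=> mu; rewrite /v sort_nth ?size_main // count_main.
apply/eqP; rewrite eqn_leq; apply/andP; split.
  apply: spec_le => R HR; rewrite key -HR card_Rsec; apply: leq_sum => i _.
  set L := #|Rsec R i|.
  have Lp : (L <= p)%N by rewrite /L (leq_trans (max_card _)) ?card_ord.
  case: (posnP L) => [->//|L0].
  have Hne : Rsec R i != set0 by rewrite -card_gt0.
  have H1 := UB uT HA Hne.
  have H2 : (mindist (rows_of Tp (Rsec R i)) <= spec Tp L)%N by apply: spec_ge.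
  apply: leq_trans (_ : \sum_(l < p) (l < L : nat) <= _)%N.
    by rewrite sum_lt; lia.
  apply: leq_sum => l _; case: (ltnP l L) => // Hl.
  suff -> : (mindist (rows_of (T2 ^t n *t Tp) R) <= rw (T2 ^t n) i * spec Tp l.+1)%N by [].
  apply: leq_trans H1 _; rewrite leq_mul2l; apply/orP; right.
  by apply: leq_trans H2 (spec_mono_gen _ Hl).
have Hv : (k <= \sum_(i < 2 ^ n) \sum_(l < p) (v <= rw (T2 ^t n) i * spec Tp l.+1 : nat))%N.
  by rewrite -key.
pose L i := (\sum_(l < p) (v <= rw (T2 ^t n) i * spec Tp l.+1 : nat))%N.
have Lp : forall i, (L i <= p)%N.
  move=> i; apply: leq_trans (_ : \sum_(l < p) 1 <= p)%N.
    by apply: leq_sum => l _; apply: leq_b1.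
  by rewrite sum1_card card_ord.
pose Rs i := odflt set0 [pick R : {set 'I_p} | (#|R| == L i) &&
               (mindist (rows_of Tp R) == spec Tp (L i))].
have HRs : forall i, #|Rs i| = L i /\ mindist (rows_of Tp (Rs i)) = spec Tp (L i).
  move=> i; rewrite /Rs; case: pickP => [R /andP [/eqP -> /eqP ->]//|H].
  case: (spec_attained Tp (Lp i)) => R [H1 H2].
  by move: (H R); rewrite H1 H2 !eqxx.
pose R' : {set 'I_(2 ^ n * p)} :=
  [set k | (mxtens_unindex k).2 \in Rs (mxtens_unindex k).1].
have HR'i : forall i, Rsec R' i = Rs i.
  by move=> i; apply/setP => j; rewrite !inE mxtens_indexK.
have cR' : (k <= #|R'|)%N.
  rewrite card_Rsec (eq_bigr L) // => i _; rewrite HR'i; by case: (HRs i).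
case: (exists_subset cR') => R [RR' cR].
apply: leq_trans (spec_ge _ cR).
apply: leq_trans (mindist_mono _ RR').
have R'0 : R' != set0 by rewrite -card_gt0; case/andP: Hk => Hk1 _; lia.
case: (LB Tp HA R'0) => i [Hne Hle]; apply: leq_trans Hle.
rewrite HR'i in Hne *; case: (HRs i) => cRs ->.
have L0 : (0 < L i)%N by rewrite -cRs card_gt0.
have := prefix_pred (P := fun l => (v <= rw (T2 ^t n) i * spec Tp l.+1)%N) _ L0.
rewrite -/(L i) prednK //; apply.
by move=> l /= H; apply: leq_trans H _; rewrite leq_mul2l spec_mono orbT.
Qed.

Lemma spec_cast m m' (e : m = m') (T : 'M['F_2]_m) k :
  spec (castmx (e, e) T) k = spec T k.
Proof. by case: m' / e; rewrite castmx_id. Qed.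

Lemma spec_one : spec (1 : 'M['F_2]_1) 1 = 1%N.
Proof.
apply/eqP; rewrite eqn_leq; apply/andP; split.
  by apply: spec_le => R _; apply: mindist_len.
have H : #|[set: 'I_1]| = 1%N by rewrite cardsT card_ord.
exact: leq_trans (mindist_pos _ _) (spec_ge (1 : 'M['F_2]_1) H).
Qed.

Lemma kron_one (w : seq nat) : kron_seq w [:: 1%N] = w.
Proof.
elim: w => [|a w IH] //; rewrite /kron_seq /= in IH *.
by rewrite muln1 IH.
Qed.

Lemma size_w n : size (kron_pow_seq [:: 2%N; 1%N] n) = (2 ^ n)%N.
Proof.
rewrite -count_predT Hw.
by rewrite (eq_bigr (fun _ => 1%N)) // sum1_card card_ord.
Qed.

Lemma spec_A n k : (1 <= k <= 2 ^ n)%N ->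
  spec (T2 ^t n) k = nth 0%N (sort_desc (kron_pow_seq [:: 2%N; 1%N] n)) k.-1.
Proof.
move=> Hk.
have Hk' : (1 <= k <= 2 ^ n * 1)%N by rewrite muln1.
have := @main_thm n 1 1 (unitmx1 _ _) k Hk'.
rewrite /spec_seq /= spec_one kron_one => <-.
rewrite tens_mx_scalar scale1r.
by rewrite spec_cast.
Qed.

Lemma spec_seq_A n : spec_seq (T2 ^t n) = sort_desc (kron_pow_seq [:: 2%N; 1%N] n).
Proof.
have E : [seq spec (T2 ^t n) k | k <- iota 1 (2 ^ n)] =
   map (fun k => nth 0%N (sort_desc (kron_pow_seq [:: 2%N; 1%N] n)) k.-1) (iota 1 (2 ^ n)).
  by apply/eq_in_map => k; rewrite mem_iota => Hk; apply: spec_A; lia.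
rewrite /spec_seq E.
  have Hs : size (sort_desc (kron_pow_seq [:: 2%N; 1%N] n)) = (2 ^ n)%N.
    by rewrite size_sort size_w.
  rewrite -{1}Hs -(addn0 1%N) iotaDl -map_comp.
  rewrite (eq_map (_ : _ =1 nth 0%N (sort_desc (kron_pow_seq [:: 2%N; 1%N] n)))) //.
  exact: mkseq_nth.
Qed.

Lemma perm_kron (s1 s2 t : seq nat) : perm_eq s1 s2 -> perm_eq (kron_seq s1 t) (kron_seq s2 t).
Proof. by move=> H; apply: perm_flatten; apply: perm_map. Qed.

Unset Implicit Arguments.
Theorem proposition1 (n p : nat) (Tp : 'M['F_2]_p) :
  (1 <= p)%N -> binary_kernel Tp ->
  forall k : nat, (1 <= k <= 2 ^ n * p)%N ->
    spec (T2 ^t n *t Tp) k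
      = nth 0%N (sort_desc (kron_seq (spec_seq (T2 ^t n)) (spec_seq Tp))) k.-1
    /\ spec (T2 ^t n *t Tp) k
      = nth 0%N (sort_desc (kron_seq (kron_pow_seq [:: 2%N; 1%N] n) (spec_seq Tp))) k.-1.
Proof.
move=> _ [uT _] k Hk.
have H := @main_thm n p Tp uT k Hk; split => //.
rewrite H spec_seq_A; congr (nth _ _ _).
apply/perm_sortP.
- by move=> a b; apply: leq_total.
- exact: geq_trans.
- by move=> a b /andP [H1 H2]; apply/eqP; rewrite eqn_leq; apply/andP; split.
by apply: perm_kron; rewrite perm_sym /sort_desc perm_sort.
Qed.
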